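(* Let $n\ge 4$ be an integer with $n=p^m$ for some prime $p$ and integer $m\ge 1$. Then the line graph $L(B(n,1))$ is a Cayley graph.
   Context: For $n\ge 4$, $B(n,1)$ is the graph whose vertices are the subsets of $[n]=\{1,\dots,n\}$ of size $1$ or $2$, with $v\sim w$ iff $v\subset w$ or $w\subset v$. The line graph $L(\Gamma)$ has the edges of $\Gamma$ as vertices, two being adjacent iff the edges share an endpoint. A graph is a Cayley graph if it is isomorphic to some $\mathrm{Cay}(G;\Omega)$ (vertex set a group $G$, $\Omega=\Omega^{-1}\not\ni 1$, $g\sim h$ iff $g^{-1}h\in\Omega$). *)

(* Defs.v *)
From HB Require Import structures.
From mathcomp Require Import all_boot all_fingroup.
Set Implicit Arguments. Unset Strict Implicit. Unset Printing Implicit Defensive.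

Open Scope group_scope.

(* A finite simple graph is a symmetric irreflexive relation e on a finType T. *)

Definition Bvert (n : nat) : predArgType :=
  {A : {set 'I_n} | (#|A| == 1)%N || (#|A| == 2)%N}.

Definition Badj (n : nat) : rel (Bvert n) :=
  fun v w => (val v \proper val w) || (val w \proper val v).

Definition line_vert (T : finType) (e : rel T) : predArgType :=
  {E : {set T} | [exists x, exists y, [&& x != y, e x y & E == [set x; y]]]}.

Definition line_adj (T : finType) (e : rel T) : rel (line_vert e) :=
  fun E F => (val E != val F) && (val E :&: val F != set0).

Definition is_cayley_graph (T : finType) (e : rel T) : Prop :=
  exists (gT : finGroupType) (Om : {set gT}),
    [/\ 1 \notin Om, (forall x, x \in Om -> x^-1 \in Om) &
    exists f : T -> gT, bijective f /\
      forall x y, e x y = ((f x)^-1 * f y \in Om)].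

(* Main.v *)
Require Import Defs.
From HB Require Import structures.
From mathcomp Require Import all_boot all_fingroup.
From mathcomp Require Import all_algebra all_field.
From mathcomp Require Import ring.
Set Implicit Arguments. Unset Strict Implicit. Unset Printing Implicit Defensive.

Module AffPart.
Import GRing.Theory.

Definition aff (F : finFieldType) := {p : F * F | p.1 != 0%R}.
HB.instance Definition _ (F : finFieldType) := Finite.copy (aff F) {p : F*F | p.1 != 0%R}.

Section Aff.
Variable F : finFieldType.
Local Open Scope ring_scope.
Implicit Types u v w : aff F.
Definition aA u : F := (val u).1.
Definition aB u : F := (val u).2.
Lemma aA_neq0 u : aA u != 0. Proof. exact: valP u. Qed.

Lemma amul_proof u v : (aA u * aA v, aA u * aB v + aB u).1 != 0.
Proof. by rewrite /= mulf_neq0 ?aA_neq0. Qed.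
Definition amul u v : aff F := exist _ (aA u * aA v, aA u * aB v + aB u) (amul_proof u v).
Lemma aone_proof : ((1 : F), (0 : F)).1 != 0. Proof. exact: oner_neq0. Qed.
Definition aone : aff F := exist _ ((1 : F), (0 : F)) aone_proof.
Lemma ainv_proof u : ((aA u)^-1, - ((aA u)^-1 * aB u)).1 != 0.
Proof. by rewrite /= invr_eq0 aA_neq0. Qed.
Definition ainv u : aff F := exist _ ((aA u)^-1, - ((aA u)^-1 * aB u)) (ainv_proof u).

Lemma aff_eq u v : aA u = aA v -> aB u = aB v -> u = v.
Proof.
move=> h1 h2; apply: val_inj; rewrite /aA /aB in h1 h2.
by case: (val u) h1 h2 => x y; case: (val v) => x' y' /= -> ->.
Qed.

Lemma amulA : associative amul.
Proof. by move=> u v w; apply: aff_eq; rewrite /amul /aA /aB /= /aA /aB /=; ring. Qed.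
Lemma amul1 : left_id aone amul.
Proof. by move=> u; apply: aff_eq; rewrite /amul /aA /aB /=; ring. Qed.
Lemma amulV : left_inverse aone ainv amul.
Proof.
move=> u; apply: aff_eq; rewrite /amul /aA /aB /=; have := aA_neq0 u; rewrite /aA => h.
  by rewrite mulVf.
by rewrite addrN.
Qed.
End Aff.

HB.instance Definition _ (F : finFieldType) :=
  Finite_isGroup.Build (aff F) (@amulA F) (@amul1 F) (@amulV F).

End AffPart.
Import AffPart.

Module GrPart.
Local Open Scope nat_scope.


Lemma set2_eq (T : finType) (i j k l : T) : i != j -> k != l ->
  ([set i; j] == [set k; l]) = ((i == k) && (j == l)) || ((i == l) && (j == k)).
Proof.
move=> hij hkl; apply/eqP/idP.
  move/setP => H; have := H j; have := H i; rewrite !inE !eqxx ?orbT /=.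
  move=> /esym/orP[/eqP ei|/eqP ei] /esym/orP[/eqP ej|/eqP ej]; subst.
  - by rewrite eqxx in hij.
  - by rewrite !eqxx.
  - by rewrite !eqxx orbT.
  - by rewrite eqxx in hij.
by case/orP => /andP[/eqP-> /eqP->] //; rewrite setUC.
Qed.

Lemma set2_meet (T : finType) (a b c d : T) :
  ([set a; b] :&: [set c; d] != set0) = [|| a == c, a == d, b == c | b == d].
Proof.
apply/set0Pn/idP.
  case=> x; rewrite !inE => /andP[/orP[]/eqP-> /orP[]/eqP->]; by rewrite !eqxx ?orbT.
case/or4P => /eqP->; [exists c|exists d|exists c|exists d]; by rewrite !inE !eqxx ?orbT.
Qed.

Section Graph.
Variable n : nat.
Implicit Types i j k l : 'I_n.

Lemma Sv_proof i : (#|[set i]| == 1) || (#|[set i]| == 2).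
Proof. by rewrite cards1. Qed.
Definition Sv i : Bvert n := exist _ [set i] (Sv_proof i).
Definition Pv i j : Bvert n := insubd (Sv i) [set i; j].
Lemma valPv i j : i != j -> val (Pv i j) = [set i; j].
Proof. by move=> h; rewrite /Pv insubdK // unfold_in cards2 h orbT. Qed.

Lemma Sv_eq i k : (Sv i == Sv k) = (i == k).
Proof. by apply/eqP/eqP => [/(congr1 val)/= /set1_inj|->]. Qed.
Lemma SvPv i k l : k != l -> (Sv i == Pv k l) = false.
Proof.
move=> h; apply/eqP => /(congr1 (fun A : Bvert n => #|val A|)).
by rewrite /= valPv // cards1 cards2 h.
Qed.
Lemma Pv_eq i j k l : i != j -> k != l ->
  (Pv i j == Pv k l) = ((i == k) && (j == l)) || ((i == l) && (j == k)).
Proof. by move=> h1 h2; rewrite -val_eqE /= !valPv // set2_eq. Qed.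

Lemma Lv_proof i j (h : i != j) :
  [exists x, exists y, [&& x != y, Badj x y & [set Sv i; Pv i j] == [set x; y]]].
Proof.
apply/existsP; exists (Sv i); apply/existsP; exists (Pv i j).
rewrite eqxx andbT SvPv //=.
by rewrite /Badj /= valPv // properEcard sub1set !inE eqxx cards1 cards2 h.
Qed.
Definition Lv i j (h : i != j) : line_vert (@Badj n) := exist _ [set Sv i; Pv i j] (Lv_proof h).

Lemma Lv_eq i j k l (h1 : i != j) (h2 : k != l) :
  (val (Lv h1) == val (Lv h2)) = (i == k) && (j == l).
Proof.
rewrite /= set2_eq ?SvPv // Sv_eq Pv_eq // (eq_sym (Pv i j)) SvPv //=.
case: (eqVneq i k) => [<-|] //=.
by rewrite (eq_sym j i) (negbTE h1) andbF !orbF.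
Qed.

Lemma Lv_adj i j k l (h1 : i != j) (h2 : k != l) :
  line_adj (Lv h1) (Lv h2) = ((i == k) && (j != l)) || ((i == l) && (j == k)).
Proof.
rewrite /line_adj Lv_eq /= set2_meet Sv_eq SvPv // (eq_sym (Pv i j)) SvPv // Pv_eq //=.
case: (eqVneq i k) => [<-|nik] /=.
  by rewrite (eq_sym j i) (negbTE h1) andbF andbT orbF.
by [].
Qed.

Lemma proper_Bv (x y : Bvert n) : val x \proper val y ->
  exists i j (h : i != j), x = Sv i /\ y = Pv i j.
Proof.
move=> pxy; have := proper_card pxy.
case/orP: (valP x) => /eqP cx; case/orP: (valP y) => /eqP cy; rewrite cx cy //.
move=> _; move/eqP: cx => /cards1P[i xi].
move/eqP: cy => /cards2P[j1 [j2 [hj yj]]].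
have iy : i \in val y by rewrite -sub1set -xi (proper_sub pxy).
have ex : x = Sv i by apply: val_inj; exact: xi.
rewrite yj !inE in iy; case/orP: iy => /eqP ei.
  rewrite -ei in hj yj.
  by exists i, j2, hj; split => //; apply: val_inj; rewrite valPv.
rewrite -ei in hj yj.
have hj' : i != j1 by rewrite eq_sym.
exists i, j1, hj'; split => //; apply: val_inj.
by rewrite valPv // yj setUC.
Qed.

Lemma Lv_surj (E : line_vert (@Badj n)) :
  exists i j (h : i != j), E = Lv h.
Proof.
case: E => E hE; case/existsP: (hE) => x /existsP[y /and3P[nxy axy /eqP eE]].
case/orP: axy => [/proper_Bv [i [j [h [ex ey]]]]|/proper_Bv [i [j [h [ex ey]]]]];
  exists i, j, h; apply: val_inj => /=; subst => //.
by rewrite setUC.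
Qed.
End Graph.

End GrPart.
Import GrPart.

Module MainPart.
Import GRing.Theory.
Local Open Scope ring_scope.

Lemma field_key (F : fieldType) (a b c d : F) : a != 0 ->
  ((b == d) && (a + b != c + d)) || ((b == c + d) && (a + b == d)) =
  ((a^-1 * d + - (a^-1 * b) == 0) && (a^-1 * c != 1)) ||
  ((a^-1 * c == -1) && (a^-1 * d + - (a^-1 * b) == 1)).
Proof.
move=> ha.
have K x y : (a^-1 * x == y) = (x == a * y).
  apply/eqP/eqP => [<-|->]; [by rewrite mulVKf | by rewrite mulKf].
rewrite -mulrBr !K mulr0 mulr1 mulrN1 subr_eq0.
case: (eqVneq b d) => [<-|nbd] /=.
  rewrite subrr (eq_sym 0) (negbTE ha) !andbF !orbF.
  have -> : (a + b == b) = false by rewrite -{2}(add0r b) (inj_eq (addIr b)) (negbTE ha).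
  by rewrite andbF orbF (inj_eq (addIr b)) eq_sym.
apply/andP/andP => [[/eqP e1 /eqP e2]|[/eqP e1 /eqP e2]]; split; apply/eqP.
- have -> : c = b - d by rewrite e1; ring.
  by rewrite -e2; ring.
- by rewrite -e2; ring.
- by rewrite e1 -e2; ring.
- by rewrite -e2; ring.
Qed.

Section Main.
Variables (n : nat) (F : finFieldType).
Hypothesis hF : #|F| = n.

Definition psi (x : F) : 'I_n := cast_ord hF (enum_rank x).
Definition psiinv (i : 'I_n) : F := enum_val (cast_ord (esym hF) i).
Lemma psi_inj : injective psi.
Proof. by move=> x y /cast_ord_inj /enum_rank_inj. Qed.
Lemma psiK i : psi (psiinv i) = i.
Proof. by rewrite /psi /psiinv enum_valK cast_ordKV. Qed.

Lemma hu (u : aff F) : psi (aB u) != psi (aA u + aB u).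
Proof.
rewrite (inj_eq psi_inj) eq_sym -subr_eq0 addrK; exact: aA_neq0.
Qed.
Definition g (u : aff F) : line_vert (@Badj n) := Lv (hu u).

Lemma g_inj : injective g.
Proof.
move=> u v /(congr1 val) /eqP; rewrite Lv_eq !(inj_eq psi_inj).
case/andP => /eqP e1 /eqP e2; apply: aff_eq => //.
by move: e2; rewrite e1 => /addIr.
Qed.

Lemma g_surj E : exists u, g u = E.
Proof.
have [i [j [h ->]]] := Lv_surj E.
have hp : (psiinv j - psiinv i, psiinv i).1 != 0.
  rewrite /= subr_eq0; apply/eqP => /(congr1 psi); rewrite !psiK => e.
  by rewrite e eqxx in h.
exists (exist (fun p : F * F => p.1 != 0) (psiinv j - psiinv i, psiinv i) hp); apply: val_inj => /=.
by rewrite /aA /aB /= subrK !psiK.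
Qed.

Definition Om : {set aff F} :=
  [set w | ((aB w == 0) && (aA w != 1)) || ((aA w == -1) && (aB w == 1))].

Lemma adj_g u v : line_adj (g u) (g v) = (u^-1 * v \in Om)%g.
Proof.
rewrite /g Lv_adj !(inj_eq psi_inj) inE.
have -> : aA (u^-1 * v)%g = (aA u)^-1 * aA v by [].
have -> : aB (u^-1 * v)%g = (aA u)^-1 * aB v + - ((aA u)^-1 * aB u) by [].
exact: field_key (aA_neq0 u).
Qed.

Lemma cayley_main : is_cayley_graph (@line_adj (Bvert n) (@Badj n)).
Proof.
exists (aff F), Om; split.
- by rewrite inE /aA /aB /= !eqxx /= (eq_sym 0) oner_eq0 andbF.
- move=> x; rewrite !inE.
  have -> : aA x^-1%g = (aA x)^-1 by [].
  have -> : aB x^-1%g = -((aA x)^-1 * aB x) by [].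
  case/orP=> [/andP[/eqP-> h1]|/andP[/eqP-> /eqP->]].
    by rewrite mulr0 oppr0 eqxx invr_eq1 h1.
  by rewrite invrN1 mulN1r opprK !eqxx orbT.
pose f E : aff F := odflt 1%g [pick u | g u == E].
have gK : cancel g f.
  move=> u; rewrite /f; case: pickP => [u' /eqP /g_inj -> //|/(_ u)].
  by rewrite eqxx.
have fK : cancel f g.
  move=> E; have [u <-] := g_surj E; by rewrite gK.
exists f; split; first by exists g.
move=> x y; rewrite -{1}(fK x) -{1}(fK y); exact: adj_g.
Qed.
End Main.

End MainPart.
Import MainPart.

Theorem theorem3p20 (n p m : nat) :
  (4 <= n)%N -> prime p -> (1 <= m)%N -> n = (p ^ m)%N ->
  is_cayley_graph (@line_adj (Bvert n) (@Badj n)).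
Proof.
move=> _ hp hm hn.
have [F _ hF] := pPrimePowerField hp hm.
rewrite -hn in hF; exact: cayley_main hF.
Qed.
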